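(* Let $\rho\in(0,1)$ and $\sigma_x<\sigma_y$. Let $r>0$ and $\theta\in[\theta_M,\frac{5\pi}{4}]$, and let $\mathbf a=(x_1,y_1)=(x_2^*+r\cos\theta,\,x_2^*+r\sin\theta)$. If $\mathbf a\neq\mathbf a^*$ and $x_1^2+y_1^2>2x_2^{*2}$, then $K(\mathbf a,\mathbf b^* )>0$.
   Context: Standing setup. Fix $\sigma_x,\sigma_y>0$ and $\rho\in(-1,1)$, and let $(\xi,\eta)$ be a bivariate normal random vector with mean $(0,0)$ and covariance matrix $\Sigma=\begin{pmatrix}\sigma_x^2&\rho\sigma_x\sigma_y\\ \rho\sigma_x\sigma_y&\sigma_y^2\end{pmatrix}$. Player I (the minimizer) chooses $\mathbf a=(x_1,y_1)\in\mathbb R^2$ and Player II (the maximizer) chooses $\mathbf b=(x_2,y_2)\in\mathbb R^2$. Let $C_1(\mathbf a,\mathbf b)=\{(x,y):(x_1-x)^2+(y_1-y)^2<(x_2-x)^2+(y_2-y)^2\}$ and $C_2(\mathbf a,\mathbf b)=\{(x,y):(x_1-x)^2+(y_1-y)^2>(x_2-x)^2+(y_2-y)^2\}$. The payoff to Player II (paid by Player I) is $K(\mathbf a,\mathbf b)=x_1+y_1$ if $\mathbf a=\mathbf b$, and $K(\mathbf a,\mathbf b)=(x_1+y_1)\,P((\xi,\eta)\in C_1(\mathbf a,\mathbf b))+(x_2+y_2)\,P((\xi,\eta)\in C_2(\mathbf a,\mathbf b))$ if $\mathbf a\neq\mathbf b$. For $\mathbf a=(x,y)$ write $-\mathbf a=(-x,-y)$.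 Let $x_2^*=\frac{\sqrt{2\pi(\sigma_x^2+2\rho\sigma_x\sigma_y+\sigma_y^2)}}{4}$, $\mathbf b^*=(x_2^*,x_2^* )$ and $\mathbf a^*=(-x_2^*,-x_2^* )$. With $c=\frac{\sigma_y^2-\sigma_x^2}{2\rho\sigma_x\sigma_y}$, $\theta_M$ denotes the unique angle in $(\pi/2,\pi)$ with $\tan\theta_M=c-\sqrt{c^2+1}$. *)

(* Defs.v *)
From Stdlib Require Import Reals Lra ClassicalEpsilon.
Open Scope R_scope.

Definition is_int_R (f : R -> R) (l : R) : Prop :=
  forall eps, 0 < eps -> exists M, forall a b, a <= - M -> M <= b ->
    exists pr : Riemann_integrable f a b, Rabs (RiemannInt pr - l) < eps.

(* Density of the centred bivariate normal with covariance
   [[sx^2, rho sx sy],[rho sx sy, sy^2]]. *)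
Definition binorm_density (sx sy rho : R) (x y : R) : R :=
  / (2 * PI * sx * sy * sqrt (1 - rho ^ 2)) *
  exp (- / (2 * (1 - rho ^ 2)) *
       (x ^ 2 / sx ^ 2 - 2 * rho * x * y / (sx * sy) + y ^ 2 / sy ^ 2)).

(* l is the probability that (xi,eta) lies in the set with indicator ind:
   iterated integral of density * indicator over R^2. *)
Definition is_prob (sx sy rho : R) (ind : R -> R -> R) (l : R) : Prop :=
  exists g : R -> R,
    (forall x, is_int_R (fun y => binorm_density sx sy rho x y * ind x y) (g x))
    /\ is_int_R g l.

Definition prob (sx sy rho : R) (ind : R -> R -> R) : R :=
  epsilon (inhabits 0) (fun l => is_prob sx sy rho ind l).

Definition sqdist (p : R * R) (x y : R) : R :=
  (fst p - x) ^ 2 + (snd p - y) ^ 2.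

Definition ind_C1 (a b : R * R) (x y : R) : R :=
  if Rlt_dec (sqdist a x y) (sqdist b x y) then 1 else 0.
Definition ind_C2 (a b : R * R) (x y : R) : R :=
  if Rlt_dec (sqdist b x y) (sqdist a x y) then 1 else 0.

Definition pt_eqb (a b : R * R) : bool :=
  if Req_EM_T (fst a) (fst b) then
    (if Req_EM_T (snd a) (snd b) then true else false)
  else false.

Definition K (sx sy rho : R) (a b : R * R) : R :=
  if pt_eqb a b then fst a + snd a
  else (fst a + snd a) * prob sx sy rho (ind_C1 a b)
     + (fst b + snd b) * prob sx sy rho (ind_C2 a b).

Definition x2star (sx sy rho : R) : R :=
  sqrt (2 * PI * (sx ^ 2 + 2 * rho * sx * sy + sy ^ 2)) / 4.

Definition c_const (sx sy rho : R) : R :=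
  (sy ^ 2 - sx ^ 2) / (2 * rho * sx * sy).

(* Main.v *)
Require Import Defs.
From Stdlib Require Import Reals.
From Stdlib Require Import Lra FunctionalExtensionality ClassicalEpsilon.
From Coquelicot Require Import Coquelicot.
Open Scope R_scope.

Lemma ftc (F f : R -> R) a b :
  (forall x, is_derive F x (f x)) -> (forall x, continuous f x) ->
  is_RInt f a b (F b - F a).
Proof.
  intros HD HC.
  apply (is_RInt_derive F f a b); auto.
Qed.

Lemma ftc_val (F f : R -> R) a b :
  (forall x, is_derive F x (f x)) -> (forall x, continuous f x) ->
  RInt f a b = F b - F a.
Proof. intros; apply is_RInt_unique, ftc; auto. Qed.

Ltac fix_exp := repeat match goal with |- context [exp ?a] => match goal with |- context [exp ?b] =>
  assert_fails (constr_eq a b); replace (exp a) with (exp b) by (f_equal; field) end end.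

Ltac toR := match goal with |- @eq _ ?a ?b => change (@eq R a b) end.

Definition phi (t : R) : R := exp (- (t ^ 2) / 2) / sqrt (2 * PI).

Lemma sqrt2PI_pos : 0 < sqrt (2 * PI).
Proof. apply sqrt_lt_R0. pose proof PI_RGT_0. lra. Qed.

Lemma phi_pos t : 0 < phi t.
Proof. unfold phi. pose proof sqrt2PI_pos. apply Rdiv_lt_0_compat; auto. apply exp_pos. Qed.

Lemma phi_deriv t : is_derive phi t (- t * phi t).
Proof.
  unfold phi. pose proof sqrt2PI_pos.
  auto_derive. auto. replace (- (t * (t * 1)) * / 2) with (- t ^ 2 / 2) by field. field. lra.
Qed.

Lemma phi_cont t : continuous phi t.
Proof. apply (ex_derive_continuous (K:=R_AbsRing) (V:=R_NormedModule)); exists (- t * phi t); apply phi_deriv. Qed.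

Lemma phi_le0 t : phi t <= phi 0.
Proof.
  unfold phi. pose proof sqrt2PI_pos.
  apply Rmult_le_compat_r. left; apply Rinv_0_lt_compat; auto.
  apply exp_le_3 || idtac.
  destruct (Req_dec t 0). subst; lra.
  left. apply exp_increasing. simpl. nra.
Qed.

Definition Phi (u : R) : R := / 2 + RInt phi 0 u.

Lemma Phi_deriv u : is_derive Phi u (phi u).
Proof.
  assert (H: is_derive (RInt phi 0) u (phi u)).
  { apply (is_derive_RInt phi (RInt phi 0) 0 u).
    apply filter_forall. intros. apply (RInt_correct (V:=R_CompleteNormedModule)).
    apply (ex_RInt_continuous (V:=R_CompleteNormedModule)). intros; apply phi_cont.
    apply phi_cont. }
  unfold Phi. replace (phi u) with (0 + phi u) by ring.
  apply (is_derive_plus (fun _ => /2) (RInt phi 0)). 2: exact H.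
  assert (is_derive (fun _ : R => /2) u 0) by (auto_derive; auto; ring). exact H0.
Qed.

Lemma Phi_0 : Phi 0 = /2.
Proof. unfold Phi. rewrite RInt_point. unfold zero; simpl. lra. Qed.

Lemma mvt (F f : R -> R) a b : a < b -> (forall x, is_derive F x (f x)) ->
  exists c, a < c < b /\ F b - F a = f c * (b - a).
Proof.
  intros Hab HD. destruct (MVT_cor2 F f a b Hab) as [c [H1 H2]].
  intros c _. apply is_derive_Reals. apply HD.
  exists c. split; auto.
Qed.

Lemma deriv0_const (F : R -> R) a b : (forall x, is_derive F x 0) -> F a = F b.
Proof.
  intros HD. destruct (Rtotal_order a b) as [H|[H|H]].
  - destruct (mvt F (fun _ => 0) a b H HD) as [c [_ Hc]]. lra.
  - subst; auto.
  - destruct (mvt F (fun _ => 0) b a H HD) as [c [_ Hc]]. lra.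
Qed.

Lemma phi_even t : phi (- t) = phi t.
Proof. unfold phi. replace ((-t)^2) with (t^2) by ring. reflexivity. Qed.

Lemma Phi_cont u : continuous Phi u.
Proof. apply (ex_derive_continuous (K:=R_AbsRing) (V:=R_NormedModule)); exists (phi u); apply Phi_deriv. Qed.

Lemma isd_lin (F f : R -> R) a b x : (forall y, is_derive F y (f y)) ->
  is_derive (fun u => F (a * u + b)) x (a * f (a * x + b)).
Proof.
  intros HF.
  assert (Hi : is_derive (fun u : R => a * u + b) x a) by (auto_derive; auto; ring).
  pose proof (is_derive_comp F (fun u => a * u + b) x (f (a * x + b)) a (HF _) Hi) as H.
  exact H.
Qed.

Lemma isd_plus (F G : R -> R) (f g : R) x : is_derive F x f -> is_derive G x g ->
  is_derive (fun u => F u + G u) x (f + g).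
Proof. intros H1 H2. apply (is_derive_plus F G x f g H1 H2). Qed.

Lemma isd_minus (F G : R -> R) (f g : R) x : is_derive F x f -> is_derive G x g ->
  is_derive (fun u => F u - G u) x (f - g).
Proof. intros H1 H2. apply (is_derive_minus F G x f g H1 H2). Qed.

Lemma isd_mult (F G : R -> R) (f g : R) x : is_derive F x f -> is_derive G x g ->
  is_derive (fun u => F u * G u) x (f * G x + F x * g).
Proof. intros H1 H2. pose proof (is_derive_mult F G x f g H1 H2) as H.
  simpl in H. unfold plus, mult in H; simpl in H. apply H. intros; apply Rmult_comm. Qed.

Lemma isd_scal (F : R -> R) (f c : R) x : is_derive F x f ->
  is_derive (fun u => c * F u) x (c * f).
Proof. intros H. apply (is_derive_scal F x c f H). Qed.

Lemma isd_ext (F G : R -> R) (f : R) x : (forall u, F u = G u) -> is_derive F x f -> is_derive G x f.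
Proof. intros He H. apply (is_derive_ext F G x f He H). Qed.

Lemma isd_eq (F : R -> R) (f g : R) x : f = g -> is_derive F x f -> is_derive F x g.
Proof. intros; subst; auto. Qed.

Lemma Phi_sym u : Phi (- u) = 1 - Phi u.
Proof.
  assert (H: forall x, is_derive (fun u => Phi (- u) + Phi u) x 0).
  { intros x.
    assert (H1 : is_derive (fun u => Phi (-1 * u + 0)) x (-1 * phi (-1 * x + 0)))
      by (apply isd_lin; apply Phi_deriv).
    assert (H2 : is_derive (fun u => Phi (- u)) x (-1 * phi (-1 * x + 0))).
    { revert H1; apply isd_ext; intros v; f_equal; ring. }
    pose proof (isd_plus _ _ _ _ x H2 (Phi_deriv x)) as H3.
    revert H3; apply isd_eq.
    replace (-1 * x + 0) with (-x) by ring. rewrite phi_even. ring. }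
  pose proof (deriv0_const _ u 0 H). simpl in H0. rewrite Ropp_0, Phi_0 in H0. lra.
Qed.

Lemma Phi_incr a b : a < b -> Phi a < Phi b.
Proof.
  intros Hab. destruct (mvt Phi phi a b Hab Phi_deriv) as [c [_ Hc]].
  pose proof (phi_pos c). nra.
Qed.

Lemma Phi_le a b : a <= b -> Phi a <= Phi b.
Proof. intros [H|H]. left; apply Phi_incr; auto. subst; lra. Qed.

Lemma cont_mult (f g : R -> R) x : continuous f x -> continuous g x -> continuous (fun y => f y * g y) x.
Proof. intros. apply (continuous_mult f g x); auto. Qed.
Lemma cont_plus (f g : R -> R) x : continuous f x -> continuous g x -> continuous (fun y => f y + g y) x.
Proof. intros. apply (continuous_plus f g x); auto. Qed.
Lemma cont_comp (f g : R -> R) x : continuous f x -> continuous g (f x) -> continuous (fun y => g (f y)) x.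
Proof. intros. apply (continuous_comp f g x); auto. Qed.
Lemma cont_const (c x : R) : continuous (fun _ : R => c) x.
Proof. apply (continuous_const (U:=R_UniformSpace) (V:=R_UniformSpace)). Qed.
Lemma cont_id (x : R) : continuous (fun y : R => y) x.
Proof. apply (continuous_id (U:=R_UniformSpace)). Qed.
Lemma cont_of_der (F : R -> R) (f x : R) : is_derive F x f -> continuous F x.
Proof. intros H. apply (ex_derive_continuous (K:=R_AbsRing) (V:=R_NormedModule)). exists f; auto. Qed.
Lemma cont_lin (F : R -> R) a b x : (forall y, continuous F y) -> continuous (fun y => F (a * y + b)) x.
Proof. intros H. apply cont_comp; auto. apply cont_of_der with a. auto_derive; auto; ring. Qed.

Lemma ex_RInt_cont (f : R -> R) a b : (forall x, continuous f x) -> ex_RInt f a b.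
Proof. intros H. apply (ex_RInt_continuous (V:=R_CompleteNormedModule)). intros; auto. Qed.

(* Gaussian integral *)
Definition gf (t s : R) : R := exp (- (t ^ 2 * (1 + s ^ 2)) / 2) / (1 + s ^ 2).
Definition gd (t s : R) : R := - t * exp (- (t ^ 2 * (1 + s ^ 2)) / 2).
Definition GG (t : R) : R := RInt (gf t) 0 1.

Lemma s2pos s : 0 < 1 + s ^ 2.
Proof. nra. Qed.

Lemma gf_der t s : is_derive (fun z => gf z s) t (gd t s).
Proof.
  unfold gf, gd. pose proof (s2pos s). auto_derive.
  - lra.
  - fix_exp. field. lra.
Qed.

Lemma gd_cont2 t s : continuity_2d_pt gd t s.
Proof.
  unfold gd. apply continuity_2d_pt_mult.
  apply continuity_2d_pt_opp, continuity_2d_pt_id1.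
  apply (continuity_1d_2d_pt_comp exp (fun u v => - (u ^ 2 * (1 + v ^ 2)) / 2)).
  apply derivable_continuous_pt, derivable_pt_exp.
  apply (continuity_2d_pt_ext (fun u v => (- (u * u * (1 + v * v))) * / 2)).
  intros; simpl; field.
  apply continuity_2d_pt_mult. 2: apply continuity_2d_pt_const.
  apply continuity_2d_pt_opp. apply continuity_2d_pt_mult.
  apply continuity_2d_pt_mult; apply continuity_2d_pt_id1.
  apply continuity_2d_pt_plus. apply continuity_2d_pt_const.
  apply continuity_2d_pt_mult; apply continuity_2d_pt_id2.
Qed.

Lemma gf_cont t s : continuous (gf t) s.
Proof. apply cont_of_der with (Derive (gf t) s). apply Derive_correct. unfold gf.
  pose proof (s2pos s). auto_derive. lra. Qed.

Lemma GG_der t : is_derive GG t (RInt (gd t) 0 1).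
Proof.
  unfold GG.
  assert (E : RInt (gd t) 0 1 = RInt (fun s => Derive (fun u => gf u s) t) 0 1).
  { apply RInt_ext. intros. symmetry. apply is_derive_unique, gf_der. }
  rewrite E.
  apply (is_derive_RInt_param gf 0 1 t).
  - apply filter_forall. intros. exists (gd x t0). apply gf_der.
  - intros. apply (continuity_2d_pt_ext gd). intros. symmetry. apply is_derive_unique, gf_der.
    apply gd_cont2.
  - apply filter_forall. intros. apply ex_RInt_cont. apply gf_cont.
Qed.

Lemma gd_eq t s : gd t s = - (2 * PI) * phi t * (t * phi (t * s + 0)).
Proof.
  unfold gd, phi. pose proof sqrt2PI_pos as H.
  replace (exp (- (t ^ 2 * (1 + s ^ 2)) / 2)) with (exp (- t ^ 2 / 2) * exp (- (t * s + 0) ^ 2 / 2)).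
  2: { rewrite <- exp_plus. f_equal. field. }
  assert (Hq : sqrt (2 * PI) * sqrt (2 * PI) = 2 * PI) by (apply sqrt_sqrt; pose proof PI_RGT_0; lra).
  set (q := sqrt (2 * PI)) in *. rewrite <- Hq. field. lra.
Qed.

Lemma RInt_gd t : RInt (gd t) 0 1 = - (2 * PI) * phi t * (Phi t - Phi 0).
Proof.
  rewrite (ftc_val (fun s => - (2 * PI) * phi t * Phi (t * s + 0)) (gd t)).
  - toR. replace (t * 1 + 0) with t by ring. replace (t * 0 + 0) with 0 by ring. ring.
  - intros x. apply (isd_eq _ (- (2 * PI) * phi t * (t * phi (t * x + 0)))).
    symmetry; apply gd_eq. apply isd_scal. apply isd_lin. apply Phi_deriv.
  - intros x. apply (continuous_ext (fun s => - (2 * PI) * phi t * (t * phi (t * s + 0)))).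
    intros; symmetry; apply gd_eq.
    apply cont_mult. apply cont_const. apply cont_mult. apply cont_const.
    apply cont_lin. apply phi_cont.
Qed.

Lemma atan_der x : is_derive atan x (/ (1 + x ^ 2)).
Proof. apply is_derive_Reals. apply derivable_pt_lim_atan. Qed.

Lemma GG_0 : GG 0 = PI / 4.
Proof.
  unfold GG. rewrite (RInt_ext _ (fun s => / (1 + s ^ 2))).
  rewrite (ftc_val atan). rewrite atan_1, atan_0. lra.
  apply atan_der.
  intros x. apply cont_of_der with (Derive (fun s => / (1 + s ^ 2)) x). apply Derive_correct.
  pose proof (s2pos x). auto_derive. lra.
  intros. unfold gf. replace (- (0 ^ 2 * (1 + x ^ 2)) / 2) with 0 by field.
  rewrite exp_0. toR. field. pose proof (s2pos x). lra.
Qed.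

Definition WW (t : R) : R := (Phi t - / 2) ^ 2 + GG t / PI.

Lemma WW_const t : WW t = / 4.
Proof.
  assert (H : forall x, is_derive WW x 0).
  { intros x. unfold WW.
    apply (isd_eq _ (2 * (Phi x - /2) * phi x + RInt (gd x) 0 1 * / PI)).
    rewrite RInt_gd, Phi_0. field. pose proof PI_RGT_0; lra.
    apply isd_plus.
    - apply (isd_ext (fun u => (Phi u - /2) * (Phi u - /2))). intros; ring.
      apply (isd_eq _ (phi x * (Phi x - /2) + (Phi x - /2) * phi x)). ring.
      assert (Hm : is_derive (fun u => Phi u - /2) x (phi x)).
      { apply (isd_eq _ (phi x - 0)). ring. apply (isd_minus Phi (fun _ => /2)). apply Phi_deriv.
        auto_derive; auto. }
      apply (isd_mult (fun u => Phi u - /2) (fun u => Phi u - /2)); exact Hm.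
    - apply (isd_ext (fun u => / PI * GG u)). intros; unfold Rdiv; ring.
      apply (isd_eq _ (/PI * RInt (gd x) 0 1)). ring.
      apply isd_scal. apply GG_der. }
  rewrite (deriv0_const WW t 0 H). unfold WW. rewrite GG_0, Phi_0.
  field. pose proof PI_RGT_0; lra.
Qed.

Lemma GG_bounds t : 0 <= GG t <= exp (- t ^ 2 / 2).
Proof.
  unfold GG. split.
  - rewrite <- (RInt_const 0 1 0) at 1 || idtac.
    apply Rle_trans with (RInt (fun _ => 0) 0 1).
    rewrite RInt_const. unfold scal; simpl; unfold mult; simpl. lra.
    apply RInt_le. lra. apply ex_RInt_cont; intros; apply cont_const.
    apply ex_RInt_cont; apply gf_cont.
    intros. unfold gf. left. apply Rdiv_lt_0_compat. apply exp_pos. apply s2pos.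
  - apply Rle_trans with (RInt (fun _ => exp (- t ^ 2 / 2)) 0 1).
    apply RInt_le. lra. apply ex_RInt_cont; apply gf_cont.
    apply ex_RInt_cont; intros; apply cont_const.
    intros. unfold gf. pose proof (s2pos x).
    apply Rle_trans with (exp (- (t ^ 2 * (1 + x ^ 2)) / 2)).
    unfold Rdiv at 1. rewrite <- (Rmult_1_r (exp _)) at 2.
    apply Rmult_le_compat_l. left; apply exp_pos.
    rewrite <- Rinv_1. apply Rinv_le_contravar. lra. nra.
    destruct (Req_dec t 0). subst. right. f_equal. field.
    left. apply exp_increasing. assert (0 < t ^ 2) by (apply pow2_gt_0; auto). assert (0 < x ^ 2) by (apply pow2_gt_0; lra). assert (0 < t^2 * x^2) by (apply Rmult_lt_0_compat; auto). nra.
    rewrite RInt_const. unfold scal; simpl; unfold mult; simpl. lra.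
Qed.

Lemma Phi_sq t : (Phi t - /2) ^ 2 = / 4 - GG t / PI.
Proof. pose proof (WW_const t). unfold WW in H. lra. Qed.

Lemma Phi_le1 t : Phi t <= 1.
Proof.
  pose proof (Phi_sq t). pose proof (GG_bounds t). pose proof PI_RGT_0.
  assert (0 <= GG t / PI) by (apply Rdiv_le_0_compat; lra).
  nra.
Qed.

Lemma Phi_lt1 t : Phi t < 1.
Proof. pose proof (Phi_incr t (t+1)). pose proof (Phi_le1 (t+1)). lra. Qed.

Lemma Phi_gt0 t : 0 < Phi t.
Proof. pose proof (Phi_lt1 (-t)). rewrite Phi_sym in H. lra. Qed.

Lemma exp_bound v : exp (- v ^ 2 / 2) <= / (1 + v ^ 2 / 2).
Proof.
  pose proof (exp_ineq1_le (v ^ 2 / 2)).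
  assert (0 <= v ^ 2) by (apply pow2_ge_0).
  replace (- v ^ 2 / 2) with (- (v ^ 2 / 2)) by field. rewrite exp_Ropp.
  apply Rinv_le_contravar. lra. lra.
Qed.

Lemma Q_bound t : 0 <= t -> 1 - Phi t <= exp (- t ^ 2 / 2).
Proof.
  intros Ht. pose proof (Phi_sq t). pose proof (GG_bounds t). pose proof PI_RGT_0.
  pose proof PI2_1.
  assert (HA : Phi 0 <= Phi t) by (apply Phi_le; auto). rewrite Phi_0 in HA.
  pose proof (Phi_le1 t).
  set (A := Phi t - /2) in *. assert (HAe : A = Phi t - /2) by reflexivity.
  assert (H4 : (/2 - A) * (/2 + A) = GG t / PI) by (replace ((/2-A)*(/2+A)) with (/4 - A^2) by field; lra).
  assert (H5 : (/2 - A) * / 2 <= GG t / PI) by (rewrite <- H4; apply Rmult_le_compat_l; lra).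
  assert (H6 : GG t / PI <= GG t / 2).
  { unfold Rdiv. apply Rmult_le_compat_l. lra. apply Rinv_le_contravar; lra. }
  unfold A in *. lra.
Qed.

Lemma Q_small eps : 0 < eps -> exists T, 0 < T /\ forall t, T <= t -> 1 - Phi t < eps.
Proof.
  intros He. exists (2 / eps + 1). split.
  assert (0 < 2 / eps) by (apply Rdiv_lt_0_compat; lra). lra.
  intros t Ht. assert (0 < 2 / eps) by (apply Rdiv_lt_0_compat; lra).
  eapply Rle_lt_trans. apply Q_bound. lra.
  eapply Rle_lt_trans. apply exp_bound.
  assert (t ^ 2 >= t * (2 / eps + 1)) by nra.
  assert (1 + t ^ 2 / 2 > / eps).
  { assert (2/eps * eps = 2) by (field; lra).
    assert (t * (2/eps+1) > 2/eps) by nra.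
    apply Rlt_gt. apply (Rmult_lt_reg_r eps). lra. rewrite Rinv_l. 2: lra. nra. }
  rewrite <- (Rinv_inv eps). apply Rinv_lt_contravar.
  apply Rmult_lt_0_compat. apply Rinv_0_lt_compat; lra. lra. lra.
Qed.

Lemma exp_small eps : 0 < eps -> exists T, 0 < T /\ forall t, T <= t -> exp (- t ^ 2 / 2) < eps.
Proof.
  intros He. exists (2 / eps + 1). split.
  assert (0 < 2 / eps) by (apply Rdiv_lt_0_compat; lra). lra.
  intros t Ht. assert (0 < 2 / eps) by (apply Rdiv_lt_0_compat; lra).
  eapply Rle_lt_trans. apply exp_bound.
  assert (t ^ 2 >= t * (2 / eps + 1)) by nra.
  assert (1 + t ^ 2 / 2 > / eps).
  { assert (2/eps * eps = 2) by (field; lra).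
    assert (t * (2/eps+1) > 2/eps) by nra.
    apply Rlt_gt. apply (Rmult_lt_reg_r eps). lra. rewrite Rinv_l. 2: lra. nra. }
  rewrite <- (Rinv_inv eps). apply Rinv_lt_contravar.
  apply Rmult_lt_0_compat. apply Rinv_0_lt_compat; lra. lra. lra.
Qed.

Definition a0 := sqrt (2 * PI) / 2.
Definition hh (u : R) := phi u * (a0 + u) - (1 - Phi u).
Definition gg (u : R) := sqrt (2 * PI) / 4 * (2 * Phi u - 1) - u * (1 - Phi u).

Lemma hh_der u : is_derive hh u (phi u * (2 - u * (a0 + u))).
Proof.
  unfold hh.
  apply (isd_eq _ ((- u * phi u) * (a0 + u) + phi u * 1 - (0 - phi u))). ring.
  apply (isd_minus (fun u => phi u * (a0 + u)) (fun u => 1 - Phi u)).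
  apply (isd_mult phi (fun u => a0 + u)). apply phi_deriv. auto_derive; auto.
  apply (isd_minus (fun _ => 1) Phi). auto_derive; auto. apply Phi_deriv.
Qed.

Lemma gg_der u : is_derive gg u (hh u).
Proof.
  unfold gg, hh.
  apply (isd_eq _ (sqrt (2 * PI) / 4 * (2 * phi u - 0) - (1 * (1 - Phi u) + u * (0 - phi u)))).
  unfold a0. field.
  apply (isd_minus (fun u => sqrt (2 * PI) / 4 * (2 * Phi u - 1)) (fun u => u * (1 - Phi u))).
  apply isd_scal. apply (isd_minus (fun u => 2 * Phi u) (fun _ => 1)).
  apply isd_scal, Phi_deriv. auto_derive; auto.
  apply (isd_mult (fun u => u) (fun u => 1 - Phi u)). auto_derive; auto.
  apply (isd_minus (fun _ => 1) Phi). auto_derive; auto. apply Phi_deriv.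
Qed.

Lemma phi0 : phi 0 = / sqrt (2 * PI).
Proof. unfold phi. replace (- 0 ^ 2 / 2) with 0 by field. rewrite exp_0. field.
  pose proof sqrt2PI_pos; lra. Qed.

Lemma hh_0 : hh 0 = 0.
Proof. unfold hh. rewrite phi0, Phi_0. unfold a0. field. pose proof sqrt2PI_pos; lra. Qed.

Lemma a0_pos : 0 < a0.
Proof. unfold a0. pose proof sqrt2PI_pos; lra. Qed.

Lemma hh_lower v : 0 <= v -> - exp (- v ^ 2 / 2) <= hh v.
Proof.
  intros Hv. unfold hh. pose proof (Q_bound v Hv). pose proof (phi_pos v). pose proof a0_pos.
  assert (0 <= phi v * (a0 + v)) by (apply Rmult_le_pos; lra). lra.
Qed.

Lemma hh_pos u : 0 < u -> 0 < hh u.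
Proof.
  intros Hu. pose proof a0_pos.
  destruct (Rle_lt_dec (u * (a0 + u)) 2) as [Hs|Hs].
  - destruct (mvt hh _ 0 u Hu hh_der) as [c [Hc E]]. rewrite hh_0 in E.
    pose proof (phi_pos c).
    assert (c * (a0 + c) < u * (a0 + u)) by nra.
    assert (0 < phi c * (2 - c * (a0 + c))) by (apply Rmult_lt_0_compat; lra).
    nra.
  - assert (Hdec : forall v w, u <= v -> v < w -> hh w < hh v).
    { intros v w Hv Hw. destruct (mvt hh _ v w Hw hh_der) as [c [Hc E]].
      pose proof (phi_pos c).
      assert (c * (a0 + c) > u * (a0 + u)) by nra.
      assert (0 < phi c * (c * (a0 + c) - 2)) by (apply Rmult_lt_0_compat; lra).
      nra. }
    assert (H1 : 0 <= hh (u + 1)).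
    { destruct (Rle_lt_dec 0 (hh (u+1))) as [|Hn]; auto.
      destruct (exp_small (- hh (u + 1))) as [T [HT HT2]]. lra.
      set (v := Rmax T (u + 2)).
      assert (T <= v) by apply Rmax_l. assert (u + 2 <= v) by apply Rmax_r.
      pose proof (HT2 v H0). pose proof (hh_lower v ltac:(lra)).
      pose proof (Hdec (u+1) v ltac:(lra) ltac:(lra)). lra. }
    pose proof (Hdec u (u+1) ltac:(lra) ltac:(lra)). lra.
Qed.

Lemma gg_0 : gg 0 = 0.
Proof. unfold gg. rewrite Phi_0. field. Qed.

Lemma gg_pos u : 0 < u -> 0 < gg u.
Proof.
  intros Hu. destruct (mvt gg hh 0 u Hu gg_der) as [c [Hc E]]. rewrite gg_0 in E.
  pose proof (hh_pos c ltac:(lra)). nra.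
Qed.

Definition lim_p (F : R -> R) l := forall eps, 0 < eps -> exists M, forall x, M <= x -> Rabs (F x - l) < eps.
Definition lim_m (F : R -> R) l := forall eps, 0 < eps -> exists M, forall x, x <= - M -> Rabs (F x - l) < eps.

Lemma int_from_is_RInt (f : R -> R) a b v : is_RInt f a b v ->
  exists pr : Riemann_integrable f a b, RiemannInt pr = v.
Proof.
  intros H. assert (E : ex_RInt f a b) by (exists v; auto).
  exists (ex_RInt_Reals_0 f a b E). rewrite <- RInt_Reals. apply is_RInt_unique; auto.
Qed.

Lemma int_pw (f g1 g2 G1 G2 : R -> R) p l1 l2 :
  (forall x, is_derive G1 x (g1 x)) -> (forall x, continuous g1 x) ->
  (forall x, is_derive G2 x (g2 x)) -> (forall x, continuous g2 x) ->
  (forall x, x < p -> f x = g1 x) -> (forall x, p < x -> f x = g2 x) ->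
  lim_m G1 l1 -> lim_p G2 l2 -> is_int_R f ((G1 p - l1) + (l2 - G2 p)).
Proof.
  intros D1 C1 D2 C2 E1 E2 L1 L2 eps He.
  destruct (L1 (eps/2) ltac:(lra)) as [M1 HM1].
  destruct (L2 (eps/2) ltac:(lra)) as [M2 HM2].
  exists (Rmax (Rabs M1) (Rmax (Rabs M2) (Rabs p + 1))).
  intros a b Ha Hb.
  assert (T1 := Rmax_l (Rabs M1) (Rmax (Rabs M2) (Rabs p + 1))).
  assert (T2 := Rmax_r (Rabs M1) (Rmax (Rabs M2) (Rabs p + 1))).
  assert (T3 := Rmax_l (Rabs M2) (Rabs p + 1)).
  assert (T4 := Rmax_r (Rabs M2) (Rabs p + 1)).
  pose proof (Rle_abs M1). pose proof (Rle_abs M2). pose proof (Rle_abs p). pose proof (Rle_abs (-p)).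
  rewrite Rabs_Ropp in H2.
  assert (Hap : a < p) by lra. assert (Hpb : p < b) by lra.
  assert (I1 : is_RInt f a p (G1 p - G1 a)).
  { apply (is_RInt_ext g1). intros x Hx. rewrite Rmin_left in Hx by lra. rewrite Rmax_right in Hx by lra.
    symmetry; apply E1; lra. apply ftc; auto. }
  assert (I2 : is_RInt f p b (G2 b - G2 p)).
  { apply (is_RInt_ext g2). intros x Hx. rewrite Rmin_left in Hx by lra. rewrite Rmax_right in Hx by lra.
    symmetry; apply E2; lra. apply ftc; auto. }
  pose proof (is_RInt_Chasles f a p b _ _ I1 I2) as I3.
  destruct (int_from_is_RInt _ _ _ _ I3) as [pr Hpr].
  exists pr. rewrite Hpr. unfold plus; simpl.
  assert (A1 : Rabs (G1 a - l1) < eps / 2) by (apply HM1; lra).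
  assert (A2 : Rabs (G2 b - l2) < eps / 2) by (apply HM2; lra).
  apply Rabs_def2 in A1. apply Rabs_def2 in A2. apply Rabs_def1; lra.
Qed.

Lemma is_int_R_unique f l1 l2 : is_int_R f l1 -> is_int_R f l2 -> l1 = l2.
Proof.
  intros H1 H2. apply Rminus_diag_uniq. apply Rabs_eq_0.
  apply Rle_antisym. 2: apply Rabs_pos.
  apply Rnot_lt_le. intros Hlt.
  set (e := Rabs (l1 - l2) / 2).
  destruct (H1 e ltac:(unfold e; lra)) as [M1 HM1].
  destruct (H2 e ltac:(unfold e; lra)) as [M2 HM2].
  set (M := Rmax (Rabs M1) (Rabs M2)).
  pose proof (Rmax_l (Rabs M1) (Rabs M2)). pose proof (Rmax_r (Rabs M1) (Rabs M2)).
  pose proof (Rle_abs M1). pose proof (Rle_abs M2).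
  destruct (HM1 (-M) M ltac:(unfold M in *; lra) ltac:(unfold M in *; lra)) as [p1 Hp1].
  destruct (HM2 (-M) M ltac:(unfold M in *; lra) ltac:(unfold M in *; lra)) as [p2 Hp2].
  rewrite (RiemannInt_P5 p2 p1) in Hp2.
  assert (Rabs (l1 - l2) <= Rabs (RiemannInt p1 - l2) + Rabs (RiemannInt p1 - l1)).
  { replace (l1 - l2) with ((RiemannInt p1 - l2) - (RiemannInt p1 - l1)) by ring.
    eapply Rle_trans. apply Rabs_triang. rewrite Rabs_Ropp. lra. }
  unfold e in *. lra.
Qed.

Lemma is_prob_unique sx sy rho ind l1 l2 :
  is_prob sx sy rho ind l1 -> is_prob sx sy rho ind l2 -> l1 = l2.
Proof.
  intros [g1 [Hg1 H1]] [g2 [Hg2 H2]].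
  assert (E : g1 = g2).
  { apply functional_extensionality. intros x. eapply is_int_R_unique; eauto. }
  subst. eapply is_int_R_unique; eauto.
Qed.

Lemma prob_eq sx sy rho ind l : is_prob sx sy rho ind l -> prob sx sy rho ind = l.
Proof.
  intros H. unfold prob.
  pose proof (epsilon_spec (inhabits 0) (fun l => is_prob sx sy rho ind l) (ex_intro _ l H)) as H2.
  eapply is_prob_unique; eauto.
Qed.

Lemma is_int_R_ext f g l : (forall x, f x = g x) -> is_int_R f l -> is_int_R g l.
Proof.
  intros E H. replace g with f; auto. apply functional_extensionality; auto.
Qed.

Lemma is_int_R_eq f l1 l2 : l1 = l2 -> is_int_R f l1 -> is_int_R f l2.
Proof. intros; subst; auto. Qed.

Lemma Phi_lim_p a b : 0 < a -> lim_p (fun y => Phi (a * y + b)) 1.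
Proof.
  intros Ha eps He. destruct (Q_small eps He) as [T [HT HT2]].
  exists ((T - b) / a). intros x Hx.
  assert (T <= a * x + b).
  { apply (Rmult_le_compat_l a) in Hx. 2: lra. unfold Rdiv in Hx.
    replace (a * ((T - b) * / a)) with (T - b) in Hx by (field; lra). lra. }
  pose proof (HT2 _ H). pose proof (Phi_le1 (a * x + b)).
  rewrite Rabs_left1; lra.
Qed.

Lemma Phi_lim_m a b : 0 < a -> lim_m (fun y => Phi (a * y + b)) 0.
Proof.
  intros Ha eps He. destruct (Q_small eps He) as [T [HT HT2]].
  exists ((T + b) / a). intros x Hx.
  assert (T <= - (a * x + b)).
  { apply (Rmult_le_compat_l a) in Hx. 2: lra. unfold Rdiv in Hx.
    replace (a * - ((T + b) * / a)) with (- (T + b)) in Hx by (field; lra). lra. }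
  pose proof (HT2 _ H). rewrite Phi_sym in H0. pose proof (Phi_gt0 (a * x + b)).
  rewrite Rabs_right; lra.
Qed.

Lemma lim_p_scal F l c : lim_p F l -> lim_p (fun y => c * F y) (c * l).
Proof.
  intros H eps He.
  destruct (H (eps / (Rabs c + 1))) as [M HM].
  apply Rdiv_lt_0_compat; auto. pose proof (Rabs_pos c); lra.
  exists M. intros x Hx. specialize (HM x Hx).
  replace (c * F x - c * l) with (c * (F x - l)) by ring. rewrite Rabs_mult.
  pose proof (Rabs_pos c). pose proof (Rabs_pos (F x - l)).
  apply Rle_lt_trans with ((Rabs c + 1) * Rabs (F x - l)). nra.
  apply (Rmult_lt_compat_l (Rabs c + 1)) in HM. 2: lra.
  replace ((Rabs c + 1) * (eps / (Rabs c + 1))) with eps in HM by (field; lra). lra.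
Qed.

Lemma lim_m_scal F l c : lim_m F l -> lim_m (fun y => c * F y) (c * l).
Proof.
  intros H eps He.
  destruct (H (eps / (Rabs c + 1))) as [M HM].
  apply Rdiv_lt_0_compat; auto. pose proof (Rabs_pos c); lra.
  exists M. intros x Hx. specialize (HM x Hx).
  replace (c * F x - c * l) with (c * (F x - l)) by ring. rewrite Rabs_mult.
  pose proof (Rabs_pos c). pose proof (Rabs_pos (F x - l)).
  apply Rle_lt_trans with ((Rabs c + 1) * Rabs (F x - l)). nra.
  apply (Rmult_lt_compat_l (Rabs c + 1)) in HM. 2: lra.
  replace ((Rabs c + 1) * (eps / (Rabs c + 1))) with eps in HM by (field; lra). lra.
Qed.

Lemma lim_p_const c : lim_p (fun _ => c) c.
Proof. intros eps He. exists 0. intros. rewrite Rminus_diag, Rabs_R0. auto. Qed.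
Lemma lim_m_const c : lim_m (fun _ => c) c.
Proof. intros eps He. exists 0. intros. rewrite Rminus_diag, Rabs_R0. auto. Qed.

Lemma cpt_of_cont (f : R -> R) x : continuous f x -> continuity_pt f x.
Proof. intros H. apply continuity_pt_filterlim. exact H. Qed.

Definition px (sx x : R) := phi (x / sx) / sx.

Lemma px_der sx x : 0 < sx -> is_derive (fun y => Phi (y / sx)) x (px sx x).
Proof.
  intros H. apply (isd_ext (fun y => Phi (/ sx * y + 0))). intros; f_equal; field; lra.
  apply (isd_eq _ (/ sx * phi (/ sx * x + 0))). unfold px. replace (/ sx * x + 0) with (x / sx) by (field; lra).
  field; lra. apply isd_lin. apply Phi_deriv.
Qed.

Lemma px_cont sx x : 0 < sx -> continuous (px sx) x.
Proof.
  intros H. unfold px. apply (continuous_ext (fun y => / sx * phi (/ sx * y + 0))).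
  intros y; toR; replace (/ sx * y + 0) with (y / sx) by (field; lra). field. lra.
  apply cont_mult. apply cont_const. apply cont_lin. apply phi_cont.
Qed.

Lemma px_pos sx x : 0 < sx -> 0 < px sx x.
Proof. intros. unfold px. apply Rdiv_lt_0_compat; auto. apply phi_pos. Qed.

Lemma px_even sx x : px sx (- x) = px sx x.
Proof. unfold px. replace (- x / sx) with (- (x / sx)) by (unfold Rdiv; ring). rewrite phi_even. auto. Qed.

Lemma Phi_comp_cont a b x : continuous (fun y => Phi (a * y + b)) x.
Proof. apply cont_lin. apply Phi_cont. Qed.

Lemma phi_comp_cont a b x : continuous (fun y => phi (a * y + b)) x.
Proof. apply cont_lin. apply phi_cont. Qed.

Definition sS sx al := sqrt (1 + al ^ 2 * sx ^ 2).

Lemma sS_pos sx al : 0 < sS sx al.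
Proof. unfold sS. apply sqrt_lt_R0. assert (0 <= al ^ 2 * sx ^ 2) by (apply Rmult_le_pos; apply pow2_ge_0). lra. Qed.

Lemma sS_sq sx al : sS sx al * sS sx al = 1 + al ^ 2 * sx ^ 2.
Proof. unfold sS. apply sqrt_sqrt. assert (0 <= al ^ 2 * sx ^ 2) by (apply Rmult_le_pos; apply pow2_ge_0). lra. Qed.

Lemma phi_mult u v : phi u * phi v = exp (- (u ^ 2 + v ^ 2) / 2) / (2 * PI).
Proof.
  unfold phi. pose proof sqrt2PI_pos.
  assert (Hq : sqrt (2 * PI) * sqrt (2 * PI) = 2 * PI) by (apply sqrt_sqrt; pose proof PI_RGT_0; lra).
  set (q := sqrt (2 * PI)) in *. rewrite <- Hq. replace (- (u ^ 2 + v ^ 2) / 2) with (- u ^ 2 / 2 + - v ^ 2 / 2) by field.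
  rewrite exp_plus. field. lra.
Qed.

Lemma sq_id sx al be x : 0 < sx ->
  px sx x * phi (al * x + be) =
  phi (be / sS sx al) / sx * phi (sS sx al / sx * x + al * be * sx / sS sx al).
Proof.
  intros Hsx. unfold px. pose proof (sS_pos sx al). pose proof (sS_sq sx al).
  set (s := sS sx al) in *.
  replace (phi (x / sx) / sx * phi (al * x + be)) with (phi (x / sx) * phi (al * x + be) / sx) by (field; lra).
  replace (phi (be / s) / sx * phi (s / sx * x + al * be * sx / s)) with
    (phi (be / s) * phi (s / sx * x + al * be * sx / s) / sx) by (field; lra).
  rewrite !phi_mult. f_equal. f_equal. f_equal. f_equal.
  assert (Hs2 : s ^ 2 = 1 + al ^ 2 * sx ^ 2) by (rewrite <- H0; ring).
  replace ((be / s) ^ 2 + (s / sx * x + al * be * sx / s) ^ 2) with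
    (be ^ 2 * (1 + al ^ 2 * sx ^ 2) / s ^ 2 + s ^ 2 * x ^ 2 / sx ^ 2 + 2 * al * be * x) by (field; lra).
  rewrite Hs2. assert (0 <= al^2*sx^2) by (apply Rmult_le_pos; apply pow2_ge_0). field; repeat split; lra.
Qed.

Lemma ex_RInt_gen sx al be a b : 0 < sx -> ex_RInt (fun x => px sx x * Phi (al * x + be)) a b.
Proof. intros. apply ex_RInt_cont. intros. apply cont_mult. apply px_cont; auto. apply Phi_comp_cont. Qed.

Lemma RInt_px sx a b : 0 < sx -> RInt (px sx) a b = Phi (b / sx) - Phi (a / sx).
Proof. intros. apply (ftc_val (fun y => Phi (y / sx))). intros; apply px_der; auto. intros; apply px_cont; auto. Qed.

Definition IN sx al N be := RInt (fun x => px sx x * Phi (al * x + be)) (- N) N.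

Lemma der_in_be sx al t u : is_derive (fun u => px sx t * Phi (al * t + u)) u (px sx t * phi (al * t + u)).
Proof.
  apply isd_scal. apply (isd_ext (fun u => Phi (1 * u + al * t))). intros; f_equal; ring.
  apply (isd_eq _ (1 * phi (1 * u + al * t))). replace (1 * u + al * t) with (al * t + u) by ring. ring.
  apply isd_lin. apply Phi_deriv.
Qed.

Lemma IN_der sx al N be : 0 < sx ->
  is_derive (IN sx al N) be (RInt (fun x => px sx x * phi (al * x + be)) (- N) N).
Proof.
  intros Hsx. unfold IN.
  assert (E : RInt (fun x => px sx x * phi (al * x + be)) (- N) N =
    RInt (fun x => Derive (fun u => px sx x * Phi (al * x + u)) be) (- N) N).
  { apply RInt_ext. intros. symmetry. apply is_derive_unique. apply der_in_be. }
  rewrite E.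
  apply (is_derive_RInt_param (fun u x => px sx x * Phi (al * x + u)) (- N) N be).
  - apply filter_forall. intros. exists (px sx t * phi (al * t + x)). apply der_in_be.
  - intros. apply (continuity_2d_pt_ext (fun u v => px sx v * phi (al * v + u))).
    intros. symmetry. apply is_derive_unique. apply der_in_be.
    apply continuity_2d_pt_mult.
    apply (continuity_1d_2d_pt_comp (px sx) (fun u v => v)). apply cpt_of_cont, px_cont; auto.
    apply continuity_2d_pt_id2.
    apply (continuity_1d_2d_pt_comp phi (fun u v => al * v + u)). apply cpt_of_cont, phi_cont.
    apply continuity_2d_pt_plus. apply continuity_2d_pt_mult. apply continuity_2d_pt_const.
    apply continuity_2d_pt_id2. apply continuity_2d_pt_id1.
  - apply filter_forall. intros. apply ex_RInt_gen; auto.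
Qed.

Lemma RInt_pp sx al be a b : 0 < sx ->
  RInt (fun x => px sx x * phi (al * x + be)) a b =
  phi (be / sS sx al) / sS sx al *
   (Phi (sS sx al / sx * b + al * be * sx / sS sx al) - Phi (sS sx al / sx * a + al * be * sx / sS sx al)).
Proof.
  intros Hsx. pose proof (sS_pos sx al).
  rewrite (ftc_val (fun x => phi (be / sS sx al) / sS sx al * Phi (sS sx al / sx * x + al * be * sx / sS sx al))).
  toR. ring.
  - intros x. apply (isd_eq _ (phi (be / sS sx al) / sS sx al * (sS sx al / sx * phi (sS sx al / sx * x + al * be * sx / sS sx al)))).
    rewrite sq_id; auto. field. split; lra.
    apply isd_scal. apply isd_lin. apply Phi_deriv.
  - intros. apply cont_mult. apply px_cont; auto. apply phi_comp_cont.
Qed.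

Definition g0 sx al x := px sx x * Phi (al * x + 0).

Lemma IN_0 sx al N : 0 < sx -> IN sx al N 0 = Phi (N / sx) - / 2.
Proof.
  intros Hsx.
  assert (Hc : forall x, continuous (g0 sx al) x).
  { intros. apply cont_mult. apply px_cont; auto. apply Phi_comp_cont. }
  assert (HE : forall N, IN sx al N 0 = RInt (g0 sx al) 0 N - RInt (g0 sx al) 0 (- N)).
  { intros M. unfold IN. fold (g0 sx al).
    rewrite <- (RInt_Chasles (g0 sx al) (- M) 0 M). rewrite <- (opp_RInt_swap (g0 sx al) 0 (-M)).
    unfold plus, opp; simpl. ring.
    apply ex_RInt_cont; auto. apply ex_RInt_cont; auto. apply ex_RInt_cont; auto. }
  assert (HD : forall x, is_derive (RInt (g0 sx al) 0) x (g0 sx al x)).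
  { intros x. apply (is_derive_RInt (g0 sx al) (RInt (g0 sx al) 0) 0 x).
    apply filter_forall. intros. apply (RInt_correct (V:=R_CompleteNormedModule)). apply ex_RInt_cont; auto.
    apply Hc. }
  assert (H0 : forall x, is_derive (fun N => RInt (g0 sx al) 0 N - RInt (g0 sx al) 0 (- N) - (Phi (N / sx) - / 2)) x 0).
  { intros x.
    assert (H1 : is_derive (fun N => RInt (g0 sx al) 0 (-1 * N + 0)) x (-1 * g0 sx al (-1 * x + 0)))
      by (apply isd_lin; auto).
    assert (H2 : is_derive (fun N => RInt (g0 sx al) 0 (- N)) x (-1 * g0 sx al (-1 * x + 0)))
      by (revert H1; apply isd_ext; intros; f_equal; ring).
    assert (H3 : is_derive (fun N => Phi (N / sx) - / 2) x (px sx x - 0)).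
    { apply (isd_minus (fun N => Phi (N / sx)) (fun _ => /2)). apply px_der; auto. auto_derive; auto. }
    pose proof (isd_minus _ _ _ _ x (isd_minus _ _ _ _ x (HD x) H2) H3) as H4.
    revert H4. apply isd_eq.
    replace (-1 * x + 0) with (- x) by ring. unfold g0. rewrite px_even.
    replace (al * - x + 0) with (- (al * x + 0)) by ring. rewrite Phi_sym. ring. }
  rewrite HE.
  pose proof (deriv0_const _ N 0 H0). simpl in H. rewrite Ropp_0, RInt_point in H.
  unfold zero in H; simpl in H. replace (0 / sx) with 0 in H by (field; lra). rewrite Phi_0 in H.
  toR. lra.
Qed.

Lemma Phi_bounds t : 0 < Phi t < 1.
Proof. split. apply Phi_gt0. apply Phi_lt1. Qed.

Lemma IN_bound sx al N be : 0 < sx -> 0 <= N ->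
  Rabs (IN sx al N be - Phi (be / sS sx al)) <=
  (1 - Phi (N / sx)) + Rabs be * (2 * phi 0 / sS sx al) *
     (1 - Phi (sS sx al / sx * N - Rabs (al * sx / sS sx al) * Rabs be)).
Proof.
  intros Hsx HN. pose proof (sS_pos sx al) as Hs. set (s := sS sx al) in *.
  set (k0 := al * sx / s). set (W := s / sx * N - Rabs k0 * Rabs be).
  set (E := fun b => IN sx al N b - Phi (b / s)).
  set (E' := fun b => phi (b / s) / s * (Phi (s / sx * N + k0 * b) - Phi (s / sx * (- N) + k0 * b) - 1)).
  assert (HD : forall b, is_derive E b (E' b)).
  { intros b. unfold E, E'.
    apply (isd_eq _ (RInt (fun x => px sx x * phi (al * x + b)) (- N) N - / s * phi (/ s * b + 0))).
    rewrite RInt_pp; auto. fold s. replace (/ s * b + 0) with (b / s) by (field; lra).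
    replace (al * b * sx / s) with (k0 * b) by (unfold k0; field; lra). field. lra.
    apply (isd_minus (IN sx al N) (fun b => Phi (b / s))). apply IN_der; auto.
    apply (isd_ext (fun b => Phi (/ s * b + 0))). intros; f_equal; field; lra.
    apply isd_lin. apply Phi_deriv. }
  assert (HB : forall c, Rabs c <= Rabs be -> Rabs (E' c) <= 2 * phi 0 / s * (1 - Phi W)).
  { intros c Hc. unfold E'.
    assert (Hk : Rabs (k0 * c) <= Rabs k0 * Rabs be).
    { rewrite Rabs_mult. apply Rmult_le_compat_l. apply Rabs_pos. auto. }
    pose proof (Rle_abs (k0 * c)). pose proof (Rle_abs (- (k0 * c))). rewrite Rabs_Ropp in H0.
    assert (H1 : Phi W <= Phi (s / sx * N + k0 * c)) by (apply Phi_le; unfold W; lra).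
    replace (s / sx * - N) with (- (s / sx * N)) by ring.
    assert (H2 : Phi (- (s / sx * N) + k0 * c) <= Phi (- W)) by (apply Phi_le; unfold W; lra).
    rewrite Phi_sym in H2.
    pose proof (Phi_bounds (s / sx * N + k0 * c)). pose proof (Phi_bounds (- (s / sx * N) + k0 * c)).
    pose proof (phi_le0 (c / s)). pose proof (phi_pos (c / s)). pose proof (phi_pos 0).
    assert (Hp : 0 < phi (c / s) / s) by (apply Rdiv_lt_0_compat; lra).
    rewrite Rabs_mult. rewrite (Rabs_left1 (Phi _ - Phi _ - 1)) by lra.
    rewrite (Rabs_right (phi (c / s) / s)) by lra.
    assert (Hq : phi (c / s) / s <= phi 0 / s).
    { unfold Rdiv. apply Rmult_le_compat_r. left; apply Rinv_0_lt_compat; lra. auto. }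
    replace (2 * phi 0 / s * (1 - Phi W)) with (phi 0 / s * (2 * (1 - Phi W))) by (field; lra).
    apply Rmult_le_compat; lra. }
  assert (E0 : E 0 = Phi (N / sx) - 1).
  { unfold E. rewrite IN_0; auto. replace (0 / s) with 0 by (field; lra). rewrite Phi_0. lra. }
  assert (HM : Rabs (E be - E 0) <= Rabs be * (2 * phi 0 / s * (1 - Phi W))).
  { destruct (Rtotal_order 0 be) as [Hb|[Hb|Hb]].
    - destruct (mvt E E' 0 be Hb HD) as [c [Hc Hc2]]. rewrite Hc2.
      replace (be - 0) with be by ring. rewrite Rabs_mult.
      rewrite Rmult_comm. apply Rmult_le_compat_l. apply Rabs_pos.
      apply HB. rewrite !Rabs_right; lra.
    - subst. rewrite Rminus_diag, Rabs_R0. lra.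
    - destruct (mvt E E' be 0 Hb HD) as [c [Hc Hc2]].
      replace (E be - E 0) with (- (E 0 - E be)) by ring. rewrite Rabs_Ropp, Hc2, Rabs_mult.
      rewrite Rmult_comm. replace (0 - be) with (- be) by ring. rewrite (Rabs_left be Hb).
      rewrite (Rabs_right (- be)) by lra.
      apply Rmult_le_compat_l. lra.
      apply HB. rewrite !Rabs_left; lra. }
  rewrite E0 in HM. unfold E in HM. fold s k0 W.
  pose proof (Phi_le1 (N / sx)).
  replace (IN sx al N be - Phi (be / s)) with ((IN sx al N be - Phi (be / s) - (Phi (N / sx) - 1)) + (Phi (N / sx) - 1)) by ring.
  eapply Rle_trans. apply Rabs_triang. rewrite (Rabs_left1 (Phi (N / sx) - 1)) by lra.
  rewrite Rmult_assoc. lra.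
Qed.

Lemma OI sx al be : 0 < sx ->
  is_int_R (fun x => px sx x * Phi (al * x + be)) (Phi (be / sS sx al)).
Proof.
  intros Hsx eps He. pose proof (sS_pos sx al) as Hs.
  set (s := sS sx al) in *. set (g := fun x => px sx x * Phi (al * x + be)).
  set (k0 := al * sx / s).
  set (C0 := Rabs be * (2 * phi 0 / s)).
  assert (HC0 : 0 <= C0).
  { unfold C0. apply Rmult_le_pos. apply Rabs_pos. pose proof (phi_pos 0).
    apply Rlt_le, Rdiv_lt_0_compat; lra. }
  set (e' := eps / (4 * (C0 + 1))).
  assert (He' : 0 < e') by (unfold e'; apply Rdiv_lt_0_compat; lra).
  destruct (Q_small e' He') as [T [HT HT2]].
  set (M := sx * T + sx * (T + Rabs k0 * Rabs be) / s + 1).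
  pose proof (Rabs_pos k0). pose proof (Rabs_pos be).
  assert (HM1 : 0 <= sx * (T + Rabs k0 * Rabs be) / s).
  { apply Rmult_le_pos. apply Rmult_le_pos; nra. left; apply Rinv_0_lt_compat; lra. }
  assert (HM0 : 0 < M) by (unfold M; nra).
  exists M. intros a b Ha Hb.
  assert (Hg : forall x, 0 <= g x <= px sx x).
  { intros. unfold g. pose proof (px_pos sx x Hsx). pose proof (Phi_bounds (al * x + be)). nra. }
  assert (EI : forall c d, ex_RInt g c d) by (intros; apply ex_RInt_gen; auto).
  assert (EP : forall c d, ex_RInt (px sx) c d) by (intros; apply ex_RInt_cont; intros; apply px_cont; auto).
  assert (HR : RInt g a b = RInt g a (- M) + IN sx al M be + RInt g M b).
  { unfold IN. fold g. rewrite <- (RInt_Chasles g a M b) by auto.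
    rewrite <- (RInt_Chasles g a (- M) M) by auto. unfold plus; simpl. ring. }
  assert (T1 : 0 <= RInt g M b <= 1 - Phi (M / sx)).
  { split.
    - apply Rle_trans with (RInt (fun _ => 0) M b).
      rewrite RInt_const. unfold scal; simpl; unfold mult; simpl. rewrite Rmult_0_r; lra.
      apply RInt_le; try lra; try apply EI. apply ex_RInt_cont; intros; apply cont_const. intros; apply Hg.
    - apply Rle_trans with (RInt (px sx) M b). apply RInt_le; try lra; try apply EI; try apply EP. intros; apply Hg.
      rewrite RInt_px; auto. pose proof (Phi_le1 (b / sx)). lra. }
  assert (T2 : 0 <= RInt g a (- M) <= 1 - Phi (M / sx)).
  { split.
    - apply Rle_trans with (RInt (fun _ => 0) a (- M)).
      rewrite RInt_const. unfold scal; simpl; unfold mult; simpl. rewrite Rmult_0_r; lra.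
      apply RInt_le; try lra; try apply EI. apply ex_RInt_cont; intros; apply cont_const. intros; apply Hg.
    - apply Rle_trans with (RInt (px sx) a (- M)). apply RInt_le; try lra; try apply EI; try apply EP. intros; apply Hg.
      rewrite RInt_px; auto. pose proof (Phi_gt0 (a / sx)).
      replace (- M / sx) with (- (M / sx)) by (field; lra). rewrite Phi_sym. lra. }
  pose proof (IN_bound sx al M be Hsx ltac:(lra)) as HB. fold s k0 in HB.
  assert (Q1 : 1 - Phi (M / sx) < e').
  { apply HT2. unfold M. apply (Rmult_le_reg_l sx). auto.
    replace (sx * ((sx * T + sx * (T + Rabs k0 * Rabs be) / s + 1) / sx)) with
      (sx * T + sx * (T + Rabs k0 * Rabs be) / s + 1) by (field; lra). nra. }
  assert (Q2 : 1 - Phi (s / sx * M - Rabs k0 * Rabs be) < e').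
  { apply HT2. unfold M.
    replace (s / sx * (sx * T + sx * (T + Rabs k0 * Rabs be) / s + 1) - Rabs k0 * Rabs be)
      with (s * T + T + s / sx) by (field; lra).
    assert (0 < s / sx) by (apply Rdiv_lt_0_compat; lra). nra. }
  assert (Hsum : Rabs (RInt g a b - Phi (be / s)) < eps).
  { rewrite HR.
    replace (RInt g a (- M) + IN sx al M be + RInt g M b - Phi (be / s)) with
      (RInt g a (- M) + RInt g M b + (IN sx al M be - Phi (be / s))) by ring.
    eapply Rle_lt_trans. apply Rabs_triang.
    rewrite Rabs_right by lra.
    assert (HQ2 : 0 <= 1 - Phi (s / sx * M - Rabs k0 * Rabs be)) by (pose proof (Phi_le1 (s / sx * M - Rabs k0 * Rabs be)); lra).
    assert (C0 * (1 - Phi (s / sx * M - Rabs k0 * Rabs be)) <= C0 * e') by (apply Rmult_le_compat_l; lra).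
    fold C0 in HB.
    assert (e' * (3 + C0) < eps).
    { unfold e'. apply (Rmult_lt_reg_r (4 * (C0 + 1))). lra.
      replace (eps / (4 * (C0 + 1)) * (3 + C0) * (4 * (C0 + 1))) with (eps * (3 + C0)) by (field; lra).
      nra. }
    nra. }
  assert (Hex : is_RInt g a b (RInt g a b)) by (apply (RInt_correct (V:=R_CompleteNormedModule)); auto).
  destruct (int_from_is_RInt _ _ _ _ Hex) as [pr Hpr]. exists pr. rewrite Hpr. exact Hsum.
Qed.

Definition tau sy rho := sy * sqrt (1 - rho ^ 2).
Definition mu sx sy rho x := rho * sy / sx * x.

Lemma r1_pos rho : -1 < rho < 1 -> 0 < sqrt (1 - rho ^ 2).
Proof. intros. apply sqrt_lt_R0. nra. Qed.

Lemma r1_sq rho : -1 < rho < 1 -> sqrt (1 - rho ^ 2) ^ 2 = 1 - rho ^ 2.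
Proof. intros. rewrite <- Rsqr_pow2. apply Rsqr_sqrt. nra. Qed.

Lemma tau_pos sy rho : 0 < sy -> -1 < rho < 1 -> 0 < tau sy rho.
Proof. intros. unfold tau. apply Rmult_lt_0_compat; auto. apply r1_pos; auto. Qed.

Lemma dens_fact sx sy rho x y : 0 < sx -> 0 < sy -> -1 < rho < 1 ->
  binorm_density sx sy rho x y =
  px sx x * (/ tau sy rho * phi (/ tau sy rho * y + - (mu sx sy rho x / tau sy rho))).
Proof.
  intros Hx Hy Hr. unfold binorm_density, px, tau, mu.
  pose proof (r1_pos rho Hr). pose proof (r1_sq rho Hr).
  set (r1 := sqrt (1 - rho ^ 2)) in *.
  replace (phi (x / sx) / sx * (/ (sy * r1) * phi (/ (sy * r1) * y + - (rho * sy / sx * x / (sy * r1)))))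
   with (phi (x / sx) * phi (/ (sy * r1) * y + - (rho * sy / sx * x / (sy * r1))) / (sx * sy * r1))
   by (field; repeat split; lra).
  rewrite phi_mult.
  assert (E : (/ (sy * r1) * y + - (rho * sy / sx * x / (sy * r1))) ^ 2 =
     (y - rho * sy / sx * x) ^ 2 / (sy ^ 2 * r1 ^ 2)) by (field; repeat split; lra).
  assert (0 < 1 - rho ^ 2) by nra.
  assert (EX : - / (2 * (1 - rho ^ 2)) * (x ^ 2 / sx ^ 2 - 2 * rho * x * y / (sx * sy) + y ^ 2 / sy ^ 2) =
     - ((x / sx) ^ 2 + (/ (sy * r1) * y + - (rho * sy / sx * x / (sy * r1))) ^ 2) / 2).
  { rewrite E, H0. field. repeat split; lra. }
  rewrite EX. pose proof PI_RGT_0. field. repeat split; lra.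
Qed.

Definition sig sx sy rho C S := sqrt (C ^ 2 * sx ^ 2 + 2 * rho * sx * sy * C * S + S ^ 2 * sy ^ 2).

Lemma sig_arg_eq sx sy rho C S :
  C ^ 2 * sx ^ 2 + 2 * rho * sx * sy * C * S + S ^ 2 * sy ^ 2 =
  (C * sx + rho * S * sy) ^ 2 + (1 - rho ^ 2) * (S ^ 2 * sy ^ 2).
Proof. ring. Qed.

Definition ind_hp C S m0 (x y : R) : R := if Rlt_dec m0 (C * x + S * y) then 1 else 0.

Lemma dens_der sx sy rho x y : 0 < sx -> 0 < sy -> -1 < rho < 1 ->
  is_derive (fun y => px sx x * Phi (/ tau sy rho * y + - (mu sx sy rho x / tau sy rho))) y
    (binorm_density sx sy rho x y).
Proof.
  intros. rewrite dens_fact; auto. apply isd_scal. apply isd_lin. apply Phi_deriv.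
Qed.


Lemma dens_cont sx sy rho x y : 0 < sx -> 0 < sy -> -1 < rho < 1 ->
  continuous (fun y => binorm_density sx sy rho x y) y.
Proof.
  intros. apply (continuous_ext (fun y => px sx x * (/ tau sy rho * phi (/ tau sy rho * y + - (mu sx sy rho x / tau sy rho))))).
  intros; symmetry; apply dens_fact; auto.
  apply cont_mult. apply cont_const. apply cont_mult. apply cont_const. apply phi_comp_cont.
Qed.

Lemma zero_der (x : R) : is_derive (fun _ : R => 0) x 0.
Proof. auto_derive; auto. Qed.

Lemma inner_Spos sx sy rho C S m0 x : 0 < sx -> 0 < sy -> -1 < rho < 1 -> 0 < S ->
  is_int_R (fun y => binorm_density sx sy rho x y * ind_hp C S m0 x y)
    (px sx x * Phi ((C / S + rho * sy / sx) / tau sy rho * x + - m0 / (S * tau sy rho))).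
Proof.
  intros Hx Hy Hr HS. pose proof (tau_pos sy rho Hy Hr) as Ht.
  set (t := tau sy rho) in *.
  set (p := (m0 - C * x) / S).
  set (G2 := fun y => px sx x * Phi (/ t * y + - (mu sx sy rho x / t))).
  eapply is_int_R_eq.
  2: apply (int_pw _ (fun _ => 0) (fun y => binorm_density sx sy rho x y) (fun _ => 0) G2 p 0 (px sx x)).
  - unfold G2. cbv beta.
    assert (Hw : Phi ((C / S + rho * sy / sx) / t * x + - m0 / (S * t)) =
       1 - Phi (/ t * p + - (mu sx sy rho x / t))).
    { rewrite <- Phi_sym. f_equal. unfold p, mu. field. repeat split; lra. }
    rewrite Hw. ring.
  - intros; apply zero_der.
  - intros; apply cont_const.
  - intros. try unfold G1; try unfold G2; unfold t; apply dens_der; auto.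
  - intros. apply dens_cont; auto.
  - intros y Hyp. unfold ind_hp. destruct (Rlt_dec m0 (C * x + S * y)).
    exfalso. unfold p in Hyp. apply (Rmult_lt_compat_l S) in Hyp; auto.
    replace (S * ((m0 - C * x) / S)) with (m0 - C * x) in Hyp by (field; lra). lra. ring.
  - intros y Hyp. unfold ind_hp. destruct (Rlt_dec m0 (C * x + S * y)). ring.
    exfalso. unfold p in Hyp. apply (Rmult_lt_compat_l S) in Hyp; auto.
    replace (S * ((m0 - C * x) / S)) with (m0 - C * x) in Hyp by (field; lra). lra.
  - apply lim_m_const.
  - unfold G2.
    assert (H := lim_p_scal _ _ (px sx x) (Phi_lim_p (/t) (-(mu sx sy rho x / t)) ltac:(apply Rinv_0_lt_compat; auto))).
    rewrite Rmult_1_r in H. exact H.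
Qed.

Lemma inner_Sneg sx sy rho C S m0 x : 0 < sx -> 0 < sy -> -1 < rho < 1 -> S < 0 ->
  is_int_R (fun y => binorm_density sx sy rho x y * ind_hp C S m0 x y)
    (px sx x * Phi (- (C / S + rho * sy / sx) / tau sy rho * x + m0 / (S * tau sy rho))).
Proof.
  intros Hx Hy Hr HS. pose proof (tau_pos sy rho Hy Hr) as Ht.
  set (t := tau sy rho) in *.
  set (p := (m0 - C * x) / S).
  set (G1 := fun y => px sx x * Phi (/ t * y + - (mu sx sy rho x / t))).
  eapply is_int_R_eq.
  2: apply (int_pw _ (fun y => binorm_density sx sy rho x y) (fun _ => 0) G1 (fun _ => 0) p 0 0).
  - unfold G1. cbv beta.
    assert (Hw : Phi (- (C / S + rho * sy / sx) / t * x + m0 / (S * t)) =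
       Phi (/ t * p + - (mu sx sy rho x / t))).
    { f_equal. unfold p, mu. field. repeat split; lra. }
    rewrite Hw. ring.
  - intros. try unfold G1; try unfold G2; unfold t; apply dens_der; auto.
  - intros. apply dens_cont; auto.
  - intros; apply zero_der.
  - intros; apply cont_const.
  - intros y Hyp. unfold ind_hp. destruct (Rlt_dec m0 (C * x + S * y)). ring.
    exfalso. unfold p in Hyp. apply (Rmult_lt_compat_l (- S)) in Hyp; try lra.
    replace (- S * ((m0 - C * x) / S)) with (- (m0 - C * x)) in Hyp by (field; lra). lra.
  - intros y Hyp. unfold ind_hp. destruct (Rlt_dec m0 (C * x + S * y)).
    exfalso. unfold p in Hyp. apply (Rmult_lt_compat_l (- S)) in Hyp; try lra.
    replace (- S * ((m0 - C * x) / S)) with (- (m0 - C * x)) in Hyp by (field; lra). lra. ring.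
  - unfold G1.
    assert (H := lim_m_scal _ _ (px sx x) (Phi_lim_m (/t) (-(mu sx sy rho x / t)) ltac:(apply Rinv_0_lt_compat; auto))).
    rewrite Rmult_0_r in H. exact H.
  - apply lim_p_const.
Qed.

Lemma sig_arg_nonneg sx sy rho C S : -1 < rho < 1 ->
  0 <= C ^ 2 * sx ^ 2 + 2 * rho * sx * sy * C * S + S ^ 2 * sy ^ 2.
Proof.
  intros Hr. rewrite sig_arg_eq.
  assert (0 <= (C * sx + rho * S * sy) ^ 2) by apply pow2_ge_0.
  assert (0 <= S ^ 2 * sy ^ 2) by (apply Rmult_le_pos; apply pow2_ge_0).
  assert (0 <= 1 - rho ^ 2) by nra. nra.
Qed.

Lemma sig_sq sx sy rho C S : -1 < rho < 1 ->
  sig sx sy rho C S * sig sx sy rho C S = C ^ 2 * sx ^ 2 + 2 * rho * sx * sy * C * S + S ^ 2 * sy ^ 2.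
Proof. intros. unfold sig. apply sqrt_sqrt. apply sig_arg_nonneg; auto. Qed.

Lemma sig_pos sx sy rho C S : 0 < sx -> 0 < sy -> -1 < rho < 1 -> (C <> 0 \/ S <> 0) -> 0 < sig sx sy rho C S.
Proof.
  intros Hx Hy Hr HCS. unfold sig. apply sqrt_lt_R0. rewrite sig_arg_eq.
  assert (0 <= (C * sx + rho * S * sy) ^ 2) by apply pow2_ge_0.
  assert (0 < 1 - rho ^ 2) by nra.
  destruct (Req_dec S 0).
  - subst. destruct HCS as [HC|HC]; [|lra].
    assert (0 < (C * sx) ^ 2) by (apply pow2_gt_0; apply Rmult_integral_contrapositive; split; lra).
    replace (C * sx + rho * 0 * sy) with (C * sx) by ring. nra.
  - assert (0 < S ^ 2 * sy ^ 2) by (apply Rmult_lt_0_compat; apply pow2_gt_0; lra). nra.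
Qed.

Lemma sS_Sne sx sy rho C S al : 0 < sx -> 0 < sy -> -1 < rho < 1 -> S <> 0 ->
  al ^ 2 = ((C / S + rho * sy / sx) / tau sy rho) ^ 2 ->
  sS sx al = sig sx sy rho C S / (Rabs S * tau sy rho).
Proof.
  intros Hx Hy Hr HS Hal. pose proof (tau_pos sy rho Hy Hr) as Ht.
  assert (HCS : C <> 0 \/ S <> 0) by auto.
  pose proof (sig_pos sx sy rho C S Hx Hy Hr HCS) as Hsg.
  assert (HaS : 0 < Rabs S) by (apply Rabs_pos_lt; auto).
  unfold sS. apply sqrt_lem_1.
  assert (0 <= al ^ 2 * sx ^ 2) by (apply Rmult_le_pos; apply pow2_ge_0). lra.
  apply Rlt_le, Rdiv_lt_0_compat; auto. apply Rmult_lt_0_compat; auto.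
  replace (sig sx sy rho C S / (Rabs S * tau sy rho) * (sig sx sy rho C S / (Rabs S * tau sy rho)))
    with (sig sx sy rho C S * sig sx sy rho C S / ((Rabs S * Rabs S) * (tau sy rho * tau sy rho)))
    by (field; lra).
  rewrite sig_sq; auto. rewrite Hal.
  assert (HSS : Rabs S * Rabs S = S ^ 2) by (rewrite <- Rabs_mult; rewrite Rabs_right; [ring | apply Rle_ge; nra]).
  rewrite HSS. unfold tau. pose proof (r1_pos rho Hr) as Hr1. pose proof (r1_sq rho Hr) as Hr1s.
  set (r1 := sqrt (1 - rho ^ 2)) in *.
  replace (sy * r1 * (sy * r1)) with (sy ^ 2 * r1 ^ 2) by ring. rewrite Hr1s.
  assert (0 < 1 - rho ^ 2) by nra.
  replace (((C / S + rho * sy / sx) / (sy * r1)) ^ 2) with ((C / S + rho * sy / sx) ^ 2 / (sy ^ 2 * r1 ^ 2))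
    by (field; repeat split; lra).
  rewrite Hr1s. field. repeat split; lra.
Qed.

Lemma HP_Sne sx sy rho C S m0 : 0 < sx -> 0 < sy -> -1 < rho < 1 -> S <> 0 ->
  is_prob sx sy rho (ind_hp C S m0) (1 - Phi (m0 / sig sx sy rho C S)).
Proof.
  intros Hx Hy Hr HS. pose proof (tau_pos sy rho Hy Hr) as Ht.
  assert (HCS : C <> 0 \/ S <> 0) by auto.
  pose proof (sig_pos sx sy rho C S Hx Hy Hr HCS) as Hsg.
  destruct (Rlt_dec 0 S) as [Hp|Hn].
  - exists (fun x => px sx x * Phi ((C / S + rho * sy / sx) / tau sy rho * x + - m0 / (S * tau sy rho))).
    split. intros x. apply inner_Spos; auto.
    eapply is_int_R_eq. 2: apply OI; auto.
    rewrite (sS_Sne sx sy rho C S); auto. rewrite Rabs_right by lra.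
    rewrite <- Phi_sym. f_equal. field. repeat split; lra.
  - assert (Hn' : S < 0) by lra.
    exists (fun x => px sx x * Phi (- (C / S + rho * sy / sx) / tau sy rho * x + m0 / (S * tau sy rho))).
    split. intros x. apply inner_Sneg; auto.
    eapply is_int_R_eq. 2: apply OI; auto.
    rewrite (sS_Sne sx sy rho C S); auto. 2: unfold Rdiv; ring. rewrite Rabs_left by lra.
    rewrite <- Phi_sym. f_equal. field. repeat split; lra.
Qed.

Lemma lim_p_ext F G l : (forall x, F x = G x) -> lim_p F l -> lim_p G l.
Proof. intros E H eps He. destruct (H eps He) as [M HM]. exists M. intros. rewrite <- E. auto. Qed.
Lemma lim_m_ext F G l : (forall x, F x = G x) -> lim_m F l -> lim_m G l.
Proof. intros E H eps He. destruct (H eps He) as [M HM]. exists M. intros. rewrite <- E. auto. Qed.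

Lemma inner_S0 sx sy rho C m0 x : 0 < sx -> 0 < sy -> -1 < rho < 1 ->
  is_int_R (fun y => binorm_density sx sy rho x y * ind_hp C 0 m0 x y)
    (if Rlt_dec m0 (C * x) then px sx x else 0).
Proof.
  intros Hx Hy Hr. pose proof (tau_pos sy rho Hy Hr) as Ht.
  set (G := fun y => px sx x * Phi (/ tau sy rho * y + - (mu sx sy rho x / tau sy rho))).
  destruct (Rlt_dec m0 (C * x)) as [Hl|Hl].
  - eapply is_int_R_eq.
    2: apply (int_pw _ (fun y => binorm_density sx sy rho x y) (fun y => binorm_density sx sy rho x y) G G 0 0 (px sx x)).
    + ring.
    + intros. unfold G. apply dens_der; auto.
    + intros. apply dens_cont; auto.
    + intros. unfold G. apply dens_der; auto.
    + intros. apply dens_cont; auto.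
    + intros y _. unfold ind_hp. destruct (Rlt_dec m0 (C * x + 0 * y)). ring. exfalso; lra.
    + intros y _. unfold ind_hp. destruct (Rlt_dec m0 (C * x + 0 * y)). ring. exfalso; lra.
    + unfold G.
      assert (H := lim_m_scal _ _ (px sx x) (Phi_lim_m (/tau sy rho) (-(mu sx sy rho x / tau sy rho)) ltac:(apply Rinv_0_lt_compat; auto))).
      rewrite Rmult_0_r in H. exact H.
    + unfold G.
      assert (H := lim_p_scal _ _ (px sx x) (Phi_lim_p (/tau sy rho) (-(mu sx sy rho x / tau sy rho)) ltac:(apply Rinv_0_lt_compat; auto))).
      rewrite Rmult_1_r in H. exact H.
  - eapply is_int_R_eq.
    2: apply (int_pw _ (fun _ => 0) (fun _ => 0) (fun _ => 0) (fun _ => 0) 0 0 0).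
    + ring.
    + intros; apply zero_der.
    + intros; apply cont_const.
    + intros; apply zero_der.
    + intros; apply cont_const.
    + intros y _. unfold ind_hp. destruct (Rlt_dec m0 (C * x + 0 * y)). exfalso; lra. ring.
    + intros y _. unfold ind_hp. destruct (Rlt_dec m0 (C * x + 0 * y)). exfalso; lra. ring.
    + apply lim_m_const.
    + apply lim_p_const.
Qed.

Lemma Phi_div_lim_p sx : 0 < sx -> lim_p (fun y => Phi (y / sx)) 1.
Proof.
  intros H. apply (lim_p_ext (fun y => Phi (/ sx * y + 0))). intros; f_equal; field; lra.
  apply Phi_lim_p. apply Rinv_0_lt_compat; auto.
Qed.
Lemma Phi_div_lim_m sx : 0 < sx -> lim_m (fun y => Phi (y / sx)) 0.
Proof.
  intros H. apply (lim_m_ext (fun y => Phi (/ sx * y + 0))). intros; f_equal; field; lra.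
  apply Phi_lim_m. apply Rinv_0_lt_compat; auto.
Qed.

Lemma HP_S0 sx sy rho C m0 : 0 < sx -> 0 < sy -> -1 < rho < 1 -> C <> 0 ->
  is_prob sx sy rho (ind_hp C 0 m0) (1 - Phi (m0 / sig sx sy rho C 0)).
Proof.
  intros Hx Hy Hr HC.
  exists (fun x => if Rlt_dec m0 (C * x) then px sx x else 0).
  split. intros x. apply inner_S0; auto.
  assert (Hsig : sig sx sy rho C 0 = Rabs C * sx).
  { unfold sig. replace (C ^ 2 * sx ^ 2 + 2 * rho * sx * sy * C * 0 + 0 ^ 2 * sy ^ 2) with ((Rabs C * sx) * (Rabs C * sx)).
    apply sqrt_square. pose proof (Rabs_pos C). nra.
    replace ((Rabs C * sx) * (Rabs C * sx)) with ((Rabs C * Rabs C) * sx ^ 2) by ring.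
    rewrite <- Rabs_mult. rewrite Rabs_right. ring. apply Rle_ge. nra. }
  rewrite Hsig.
  destruct (Rlt_dec 0 C) as [Hp|Hn].
  - rewrite Rabs_right by lra.
    eapply is_int_R_eq.
    2: apply (int_pw _ (fun _ => 0) (px sx) (fun _ => 0) (fun y => Phi (y / sx)) (m0 / C) 0 1).
    + replace (m0 / (C * sx)) with (m0 / C / sx) by (field; lra). ring.
    + intros; apply zero_der.
    + intros; apply cont_const.
    + intros; apply px_der; auto.
    + intros; apply px_cont; auto.
    + intros y Hyp. destruct (Rlt_dec m0 (C * y)); auto. exfalso.
      apply (Rmult_lt_compat_l C) in Hyp; auto. replace (C * (m0 / C)) with m0 in Hyp by (field; lra). lra.
    + intros y Hyp. destruct (Rlt_dec m0 (C * y)); auto. exfalso.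
      apply (Rmult_lt_compat_l C) in Hyp; auto. replace (C * (m0 / C)) with m0 in Hyp by (field; lra). lra.
    + apply lim_m_const.
    + apply Phi_div_lim_p; auto.
  - assert (Hn' : C < 0) by lra. rewrite Rabs_left by lra.
    eapply is_int_R_eq.
    2: apply (int_pw _ (px sx) (fun _ => 0) (fun y => Phi (y / sx)) (fun _ => 0) (m0 / C) 0 0).
    + replace (m0 / (- C * sx)) with (- (m0 / C / sx)) by (field; lra). rewrite Phi_sym. ring.
    + intros; apply px_der; auto.
    + intros; apply px_cont; auto.
    + intros; apply zero_der.
    + intros; apply cont_const.
    + intros y Hyp. destruct (Rlt_dec m0 (C * y)); auto. exfalso.
      apply (Rmult_lt_compat_l (- C)) in Hyp; try lra. replace (- C * (m0 / C)) with (- m0) in Hyp by (field; lra). lra.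
    + intros y Hyp. destruct (Rlt_dec m0 (C * y)); auto. exfalso.
      apply (Rmult_lt_compat_l (- C)) in Hyp; try lra. replace (- C * (m0 / C)) with (- m0) in Hyp by (field; lra). lra.
    + apply Phi_div_lim_m; auto.
    + apply lim_p_const.
Qed.

Lemma HP sx sy rho C S m0 : 0 < sx -> 0 < sy -> -1 < rho < 1 -> (C <> 0 \/ S <> 0) ->
  prob sx sy rho (ind_hp C S m0) = 1 - Phi (m0 / sig sx sy rho C S).
Proof.
  intros Hx Hy Hr HCS. apply prob_eq.
  destruct (Req_dec S 0).
  - subst. destruct HCS as [HC|HC]; [|lra]. apply HP_S0; auto.
  - apply HP_Sne; auto.
Qed.

Lemma trig_facts th : PI / 2 < th -> th <= 5 * PI / 4 -> cos th < 0 /\ cos th <= sin th.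
Proof.
  intros H1 H2. pose proof PI_RGT_0 as Hpi. split.
  apply cos_lt_0; lra.
  assert (H : 0 <= sin (th - PI / 4)) by (apply sin_ge_0; lra).
  rewrite sin_minus, cos_PI4, sin_PI4 in H.
  assert (0 < sqrt 2) by (apply sqrt_lt_R0; lra).
  replace (sin th * (1 / sqrt 2) - cos th * (1 / sqrt 2)) with ((sin th - cos th) / sqrt 2) in H by (field; lra).
  apply Rmult_le_compat_r with (r := sqrt 2) in H. 2: lra.
  replace ((sin th - cos th) / sqrt 2 * sqrt 2) with (sin th - cos th) in H by (field; lra). lra.
Qed.

Lemma poly_ineq a b d C S : 0 < a -> a < d -> 0 <= b -> C < 0 -> C <= S -> S <= - C ->
  C ^ 2 + S ^ 2 = 1 ->
  (C + S) ^ 2 * (C ^ 2 * a + 2 * b * C * S + S ^ 2 * d) <= a + 2 * b + d.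
Proof.
  intros Ha Had Hb HC H1 H2 H3.
  set (T := S / C).
  assert (HS : S = T * C) by (unfold T; field; lra).
  assert (HT1 : T <= 1).
  { unfold T. apply (Rmult_le_reg_r (- C)). lra. replace (S / C * - C) with (- S) by (field; lra). lra. }
  assert (HT2 : -1 <= T).
  { unfold T. apply (Rmult_le_reg_r (- C)). lra. replace (S / C * - C) with (- S) by (field; lra). lra. }
  assert (HC2 : C ^ 2 * (1 + T ^ 2) = 1) by (transitivity (C ^ 2 + S ^ 2); [rewrite HS; ring | exact H3]).
  set (B := a * (T ^ 3 + T ^ 2 + 2 * T) + 2 * b * (T ^ 3 - 1) - d * (2 * T ^ 2 + T + 1)).
  assert (HB1 : 2 * b * (T ^ 3 - 1) <= 0).
  { assert (T ^ 3 <= 1). { destruct (Rle_dec 0 T). assert (T^3 <= T) by nra. lra. nra. }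
    nra. }
  assert (HB2 : - d * (2 * T ^ 2 + T + 1) <= - a * (2 * T ^ 2 + T + 1)).
  { assert (0 < 2 * T ^ 2 + T + 1) by nra. nra. }
  assert (HB : B <= a * (T - 1) * (T ^ 2 + 1)).
  { unfold B. replace (a * (T - 1) * (T ^ 2 + 1)) with (a * (T ^ 3 + T ^ 2 + 2 * T) - a * (2 * T ^ 2 + T + 1)) by ring.
    lra. }
  assert (HB0 : B <= 0).
  { assert (a * (T - 1) * (T ^ 2 + 1) <= 0).
    { assert (0 < T ^ 2 + 1) by nra. assert (a * (T - 1) <= 0) by nra. nra. }
    lra. }
  assert (HP : 0 <= (T - 1) * B) by nra.
  assert (Hid : (a + 2 * b + d) * (1 + T ^ 2) ^ 2 - (1 + T) ^ 2 * (a + 2 * b * T + d * T ^ 2) = (T - 1) * B)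
    by (unfold B; ring).
  assert (HL : (C + S) ^ 2 * (C ^ 2 * a + 2 * b * C * S + S ^ 2 * d) =
     (C ^ 2) ^ 2 * ((1 + T) ^ 2 * (a + 2 * b * T + d * T ^ 2))) by (rewrite HS; ring).
  assert (HR : a + 2 * b + d = (C ^ 2) ^ 2 * ((a + 2 * b + d) * (1 + T ^ 2) ^ 2)).
  { replace ((C ^ 2) ^ 2 * ((a + 2 * b + d) * (1 + T ^ 2) ^ 2)) with ((a + 2 * b + d) * (C ^ 2 * (1 + T ^ 2)) ^ 2) by ring.
    rewrite HC2. ring. }
  rewrite HL, HR. apply Rmult_le_compat_l. apply pow2_ge_0. lra.
Qed.

Lemma final_ineq xs s sg k u : 0 < s -> xs = sqrt (2 * PI) * s / 4 -> 0 <= k -> k ^ 2 <= 2 ->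
  k * sg <= s -> 0 < u ->
  0 < xs * (1 - k ^ 2 * (1 - Phi u)) - k * sg * u * (1 - Phi u).
Proof.
  intros Hs Hxs Hk Hk2 Hks Hu.
  pose proof (gg_pos u Hu). unfold gg in H.
  pose proof (Phi_bounds u). pose proof sqrt2PI_pos.
  assert (Hxp : 0 < xs) by (rewrite Hxs; apply Rdiv_lt_0_compat; [apply Rmult_lt_0_compat|]; lra).
  assert (HQ : 0 <= 1 - Phi u) by lra.
  assert (E1 : xs * (1 - k ^ 2 * (1 - Phi u)) >= xs * (1 - 2 * (1 - Phi u))).
  { apply Rle_ge. apply Rmult_le_compat_l. lra. nra. }
  assert (E2 : k * sg * u * (1 - Phi u) <= s * u * (1 - Phi u)).
  { assert (0 <= u * (1 - Phi u)) by nra. nra. }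
  assert (E3 : xs * (1 - 2 * (1 - Phi u)) - s * u * (1 - Phi u) =
     s * (sqrt (2 * PI) / 4 * (2 * Phi u - 1) - u * (1 - Phi u))) by (rewrite Hxs; field).
  assert (0 < s * (sqrt (2 * PI) / 4 * (2 * Phi u - 1) - u * (1 - Phi u))) by (apply Rmult_lt_0_compat; lra).
  lra.
Qed.

Theorem mainTheorem13 (sx sy rho : R) (hsx : 0 < sx) (hsy : 0 < sy)
  (hrho0 : 0 < rho) (hrho1 : rho < 1) (hs : sx < sy)
  (thM : R) (hthM1 : PI / 2 < thM) (hthM2 : thM < PI)
  (hthM3 : tan thM = c_const sx sy rho - sqrt (c_const sx sy rho ^ 2 + 1))
  (r th : R) (hr : 0 < r) (hth1 : thM <= th) (hth2 : th <= 5 * PI / 4) :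
  let xs := x2star sx sy rho in
  let x1 := xs + r * cos th in
  let y1 := xs + r * sin th in
  (x1, y1) <> (- xs, - xs) ->
  x1 ^ 2 + y1 ^ 2 > 2 * xs ^ 2 ->
  K sx sy rho (x1, y1) (xs, xs) > 0.
Proof.
  intros xs x1 y1 _ Hpos.
  assert (Hr : -1 < rho < 1) by lra.
  set (C := cos th) in *. set (S := sin th) in *.
  assert (HCS1 : C ^ 2 + S ^ 2 = 1).
  { pose proof (sin2_cos2 th). unfold Rsqr in H. unfold C, S. lra. }
  assert (HCS : C <> 0 \/ S <> 0).
  { destruct (Req_dec C 0); auto. right. intros HS0. rewrite H, HS0 in HCS1. lra. }
  set (s := sqrt (sx ^ 2 + 2 * rho * sx * sy + sy ^ 2)).
  assert (Harg : 0 < sx ^ 2 + 2 * rho * sx * sy + sy ^ 2).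
  { assert (0 < rho * sx * sy) by (apply Rmult_lt_0_compat; [apply Rmult_lt_0_compat|]; lra). nra. }
  assert (Hs : 0 < s) by (apply sqrt_lt_R0; auto).
  assert (Hxs : xs = sqrt (2 * PI) * s / 4).
  { unfold xs, x2star, s. rewrite sqrt_mult. reflexivity. pose proof PI_RGT_0; lra. lra. }
  assert (Hxp : 0 < xs).
  { rewrite Hxs. pose proof sqrt2PI_pos. apply Rdiv_lt_0_compat; [apply Rmult_lt_0_compat|]; lra. }
  set (m0 := (x1 ^ 2 + y1 ^ 2 - 2 * xs ^ 2) / (2 * r)).
  assert (Hm0 : 0 < m0) by (unfold m0; apply Rdiv_lt_0_compat; lra).
  assert (Hid : forall x y, sqdist (x1, y1) x y - sqdist (xs, xs) x y = 2 * r * (m0 - (C * x + S * y))).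
  { intros. unfold sqdist, m0, x1, y1. simpl. field. lra. }
  assert (E1 : ind_C1 (x1, y1) (xs, xs) = ind_hp C S m0).
  { apply functional_extensionality. intros x. apply functional_extensionality. intros y.
    unfold ind_C1, ind_hp. specialize (Hid x y).
    destruct (Rlt_dec (sqdist (x1, y1) x y) (sqdist (xs, xs) x y)) as [h1|h1];
    destruct (Rlt_dec m0 (C * x + S * y)) as [h2|h2]; auto; exfalso.
    - assert (2 * r * (m0 - (C * x + S * y)) >= 0) by (apply Rle_ge, Rmult_le_pos; lra). lra.
    - assert (2 * r * (m0 - (C * x + S * y)) < 0).
      { replace (2 * r * (m0 - (C * x + S * y))) with (- (2 * r * ((C * x + S * y) - m0))) by ring.
        assert (0 < 2 * r * ((C * x + S * y) - m0)) by (apply Rmult_lt_0_compat; lra). lra. }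
      lra. }
  assert (E2 : ind_C2 (x1, y1) (xs, xs) = ind_hp (- C) (- S) (- m0)).
  { apply functional_extensionality. intros x. apply functional_extensionality. intros y.
    unfold ind_C2, ind_hp. specialize (Hid x y).
    destruct (Rlt_dec (sqdist (xs, xs) x y) (sqdist (x1, y1) x y)) as [h1|h1];
    destruct (Rlt_dec (- m0) (- C * x + - S * y)) as [h2|h2]; auto; exfalso.
    - assert (2 * r * (m0 - (C * x + S * y)) <= 0).
      { replace (2 * r * (m0 - (C * x + S * y))) with (- (2 * r * ((C * x + S * y) - m0))) by ring.
        assert (0 <= 2 * r * ((C * x + S * y) - m0)) by (apply Rmult_le_pos; lra). lra. }
      lra.
    - assert (2 * r * (m0 - (C * x + S * y)) > 0) by (apply Rmult_lt_0_compat; lra). lra. }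
  assert (HCS' : - C <> 0 \/ - S <> 0) by (destruct HCS; [left|right]; lra).
  set (sg := sig sx sy rho C S).
  assert (Hsg : 0 < sg) by (apply sig_pos; auto).
  assert (Hsg' : sig sx sy rho (- C) (- S) = sg) by (unfold sg, sig; f_equal; ring).
  assert (P1 : prob sx sy rho (ind_C1 (x1, y1) (xs, xs)) = 1 - Phi (m0 / sg)).
  { rewrite E1. apply HP; auto. }
  assert (P2 : prob sx sy rho (ind_C2 (x1, y1) (xs, xs)) = Phi (m0 / sg)).
  { rewrite E2. rewrite HP; auto. rewrite Hsg'. replace (- m0 / sg) with (- (m0 / sg)) by (field; lra).
    rewrite Phi_sym. ring. }
  assert (Hneq : pt_eqb (x1, y1) (xs, xs) = false).
  { unfold pt_eqb. simpl. destruct (Req_EM_T x1 xs) as [e1|e1]; auto.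
    destruct (Req_EM_T y1 xs) as [e2|e2]; auto.
    exfalso. unfold x1 in e1. unfold y1 in e2.
    assert (r * C = 0) by lra. assert (r * S = 0) by lra.
    destruct HCS as [HC|HC]; apply HC; apply (Rmult_eq_reg_l r); lra. }
  unfold K. rewrite Hneq. simpl. rewrite P1, P2.
  set (u := m0 / sg).
  assert (Hu : 0 < u) by (unfold u; apply Rdiv_lt_0_compat; auto).
  pose proof (Phi_bounds u).
  assert (Hsum : x1 + y1 = 2 * xs + r * (C + S)) by (unfold x1, y1; ring).
  rewrite Hsum.
  destruct (Rle_dec 0 (C + S)) as [Hp|Hn].
  - assert (0 <= r * (C + S) * (1 - Phi u)) by (apply Rmult_le_pos; [apply Rmult_le_pos|]; lra).
    nra.
  - set (k := - (C + S)).
    assert (Hk : 0 < k) by (unfold k; lra).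
    destruct (trig_facts th ltac:(lra) hth2) as [HC0 HCS2]. fold C S in HC0, HCS2.
    assert (Hk2 : k ^ 2 <= 2) by (unfold k; nra).
    assert (Hpoly := poly_ineq (sx ^ 2) (rho * sx * sy) (sy ^ 2) C S).
    assert (Hks2 : (k * sg) ^ 2 <= s ^ 2).
    { replace ((k * sg) ^ 2) with ((C + S) ^ 2 * (sg * sg)) by (unfold k; ring).
      unfold sg. rewrite sig_sq; auto.
      replace (s ^ 2) with (s * s) by ring. unfold s. rewrite sqrt_sqrt by lra.
      replace (C ^ 2 * sx ^ 2 + 2 * rho * sx * sy * C * S + S ^ 2 * sy ^ 2) with
        (C ^ 2 * sx ^ 2 + 2 * (rho * sx * sy) * C * S + S ^ 2 * sy ^ 2) by ring.
      replace (sx ^ 2 + 2 * rho * sx * sy + sy ^ 2) with (sx ^ 2 + 2 * (rho * sx * sy) + sy ^ 2) by ring.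
      apply Hpoly.
      - nra.
      - nra.
      - assert (0 < rho * sx * sy) by (apply Rmult_lt_0_compat; [apply Rmult_lt_0_compat|]; lra). lra.
      - auto.
      - auto.
      - unfold k in Hk; lra.
      - auto. }
    assert (Hks : k * sg <= s).
    { assert (0 <= k * sg) by (apply Rmult_le_pos; lra). nra. }
    assert (Hm0e : m0 = r / 2 - xs * k).
    { assert (Hq : x1 ^ 2 + y1 ^ 2 - 2 * xs ^ 2 = 2 * xs * r * (C + S) + r ^ 2 * (C ^ 2 + S ^ 2))
        by (unfold x1, y1; ring).
      rewrite HCS1 in Hq. unfold m0. rewrite Hq. unfold k. field. lra. }
    assert (Hrr : r = 2 * (sg * u + xs * k)).
    { unfold u. replace (sg * (m0 / sg)) with m0 by (field; lra). lra. }
    pose proof (final_ineq xs s sg k u Hs Hxs ltac:(lra) Hk2 Hks Hu).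
    replace (C + S) with (- k) by (unfold k; ring).
    rewrite Hrr.
    assert (Eq : (2 * xs + 2 * (sg * u + xs * k) * - k) * (1 - Phi u) + (xs + xs) * Phi u =
      2 * (xs * (1 - k ^ 2 * (1 - Phi u)) - k * sg * u * (1 - Phi u))) by ring.
    lra.
Qed.
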